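(* Let $f_0\in C^\infty([0,\infty))$ be a monotone solution of \[ f''(y)+\left(\frac{2}{y}-\frac{y}{2}\right)f'(y)-\frac{1}{y^2}\sin(2f(y))=0\ \ (y>0),\qquad f(0)=0,\qquad \lim_{y\to\infty}f(y)\ \text{finite}, \] satisfying $\lVert f_0-\widetilde f_0\rVert\le 5\cdot10^{-4}$ (notation in the context), and let $\mathcal A_0$ denote the differential expression $\mathcal A_0 w=-\frac{1}{\rho}\partial_y(\rho\,\partial_yw)+\frac{2\cos(2f_0(y))}{y^2}w$ with $\rho(y)=y^2e^{-y^2/4}$. For $\lambda\in\mathbb R$ let $W_\lambda$ be the unique solution of the initial value problem $\mathcal A_0W_\lambda=\lambda W_\lambda$ on $(0,\infty)$, $W_\lambda(0)=0$, $W_\lambda'(0)=1$. If $\lambda\le -1$, then $W_\lambda$ has no zeros in $(0,\infty)$.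
   Context: Here $\widetilde f_0(y)=2\arctan\big(\sum_{n=0}^{14}(f_0)_nT_{2n+1}(y/\sqrt{2+y^2})\big)$ with $T_m$ the Chebyshev polynomials of the first kind and coefficients $(f_0)_0,\dots,(f_0)_{14}$ equal to $\frac{268245}{72878},\frac{-3174}{105551},\frac{1897}{97022},\frac{14}{72731},\frac{79}{119383},\frac{4}{66337},\frac{5}{109368},\frac{1}{109045},\frac{1}{204079},\frac{1}{675805},\frac{1}{1400761},\frac{1}{3586839},\frac{1}{7289041},\frac{1}{16940631},\frac{1}{59286294}$; $\lVert f\rVert=\lVert p_1f\rVert_{L^\infty(0,\infty)}+\lVert p_3f'\rVert_{L^\infty(0,\infty)}$ with $p_1(y)=\frac{\sqrt{2+y^2}}{\sqrt2\,y}$, $p_3(y)=\frac{(2+y^2)^{3/2}}{2\sqrt2}$. The initial conditions at the regular singular point $y=0$ mean $W_\lambda(y)=y+o(y)$ as $y\to0$. *)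

(* Defs.v *)
From Stdlib Require Import Reals Lra.
From Coquelicot Require Import Coquelicot.
Open Scope R_scope.

(* Chebyshev polynomials of the first kind: T_0 = 1, T_1 = x,
   T_{m+2} = 2 x T_{m+1} - T_m. *)
Fixpoint cheb_pair (m : nat) (x : R) : R * R :=
  match m with
  | O => (1, x)
  | S k => let p := cheb_pair k x in (snd p, 2 * x * snd p - fst p)
  end.
Definition chebT (m : nat) (x : R) : R := fst (cheb_pair m x).

Definition f0_coef (n : nat) : R :=
  match n with
  | 0 => 268245 / 72878
  | 1 => -3174 / 105551
  | 2 => 1897 / 97022
  | 3 => 14 / 72731
  | 4 => 79 / 119383
  | 5 => 4 / 66337
  | 6 => 5 / 109368
  | 7 => 1 / 109045
  | 8 => 1 / 204079
  | 9 => 1 / 675805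
  | 10 => 1 / 1400761
  | 11 => 1 / 3586839
  | 12 => 1 / 7289041
  | 13 => 1 / 16940631
  | 14 => 1 / 59286294
  | _ => 0
  end.

Definition f0_tilde (y : R) : R :=
  2 * atan (sum_f_R0 (fun n => f0_coef n * chebT (2 * n + 1) (y / sqrt (2 + y ^ 2))) 14).

Definition p1 (y : R) : R := sqrt (2 + y ^ 2) / (sqrt 2 * y).
Definition p3 (y : R) : R := (sqrt (2 + y ^ 2)) ^ 3 / (2 * sqrt 2).

(* ||f - g|| <= eps for the norm ||h|| = ||p1 h||_{L^oo(0,oo)} + ||p3 h'||_{L^oo(0,oo)}
   (for the continuous functions at hand, the essential sup is the sup). *)
Definition norm_diff_le (f g : R -> R) (eps : R) : Prop :=
  exists A B : R, A + B <= eps /\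
    (forall y, 0 < y -> Rabs (p1 y * (f y - g y)) <= A) /\
    (forall y, 0 < y -> Rabs (p3 y * (Derive f y - Derive g y)) <= B).

(* f is C^oo on [0,oo): smooth on (0,oo), and every derivative extends
   continuously to 0 (f itself being continuous from the right at 0). *)
Definition smooth_closed_halfline (f : R -> R) : Prop :=
  (forall (n : nat) (y : R), 0 < y -> ex_derive_n f n y) /\
  (forall n : nat, exists l : R, filterlim (Derive_n f n) (at_right 0) (locally l)) /\
  filterlim f (at_right 0) (locally (f 0)).

Definition monotone_halfline (f : R -> R) : Prop :=
  (forall x y, 0 <= x -> x <= y -> f x <= f y) \/
  (forall x y, 0 <= x -> x <= y -> f y <= f x).

Definition profile_solution (f : R -> R) : Prop :=
  (forall y, 0 < y ->
     Derive_n f 2 y + (2 / y - y / 2) * Derive f y - sin (2 * f y) / y ^ 2 = 0) /\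
  f 0 = 0 /\
  exists L : R, filterlim f (Rbar_locally p_infty) (locally L).

Definition rho (y : R) : R := y ^ 2 * exp (- y ^ 2 / 4).

Definition eigen_ode (f0 : R -> R) (lam : R) (W : R -> R) : Prop :=
  forall y, 0 < y ->
    ex_derive W y /\
    ex_derive (fun t => rho t * Derive W t) y /\
    - (1 / rho y) * Derive (fun t => rho t * Derive W t) y
      + 2 * cos (2 * f0 y) / y ^ 2 * W y = lam * W y.

(* initial condition at the regular singular point: W(y) = y + o(y) as y -> 0+ *)
Definition init_cond (W : R -> R) : Prop :=
  filterlim (fun y => W y / y) (at_right 0) (locally 1).

(* Main.v *)
Require Import Defs.
From Stdlib Require Import Reals Lra.
From Coquelicot Require Import Coquelicot.
Open Scope R_scope.


Lemma quot_nonneg a b : a <= 0 -> b < 0 -> 0 <= a / b.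
Proof. intros. unfold Rdiv. replace (a * / b) with ((-a) * / (-b)) by (field; lra).
apply Rmult_le_pos; [lra|]. apply Rlt_le, Rinv_0_lt_compat; lra. Qed.

Lemma quot_nonneg' a b : 0 <= a -> 0 < b -> 0 <= a / b.
Proof. intros. unfold Rdiv. apply Rmult_le_pos; [lra|]. apply Rlt_le, Rinv_0_lt_compat; lra. Qed.

Lemma deriv_left_le (k : R -> R) z l d : 0 < d -> is_derive k z l ->
  (forall t, z - d < t < z -> k t <= k z) -> 0 <= l.
Proof.
  intros Hd Hk Hm. apply is_derive_Reals in Hk.
  destruct (Rle_or_lt 0 l) as [|Hl]; auto. exfalso.
  destruct (Hk (-l/2) ltac:(lra)) as [del Hdel].
  set (h := - Rmin d del / 2).
  assert (Hmin1 : Rmin d del <= d) by apply Rmin_l.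
  assert (Hmin2 : Rmin d del <= del) by apply Rmin_r.
  assert (Hmin0 : 0 < Rmin d del) by (apply Rmin_glb_lt; [lra| apply cond_pos]).
  assert (Hh : h <> 0) by (unfold h; lra).
  assert (Hh2 : Rabs h < del) by (unfold h; rewrite Rabs_left; lra).
  specialize (Hdel h Hh Hh2).
  assert (Hq : 0 <= (k (z + h) - k z) / h).
  { apply quot_nonneg; [| unfold h; lra]. assert (k (z+h) <= k z) by (apply Hm; unfold h; lra). lra. }
  apply Rabs_def2 in Hdel. lra.
Qed.

Lemma deriv_left_ge (k : R -> R) z l d : 0 < d -> is_derive k z l ->
  (forall t, z - d < t < z -> k z <= k t) -> l <= 0.
Proof.
  intros Hd Hk Hm.
  assert (H: is_derive (fun t => - k t) z (- l)) by (apply (is_derive_opp k z l); auto).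
  assert (0 <= - l); [|lra].
  apply (deriv_left_le _ z _ d Hd H). intros t Ht. specialize (Hm t Ht). lra.
Qed.

Lemma deriv_right_ge (k : R -> R) z l d : 0 < d -> is_derive k z l ->
  (forall t, z < t < z + d -> k z <= k t) -> 0 <= l.
Proof.
  intros Hd Hk Hm. apply is_derive_Reals in Hk.
  destruct (Rle_or_lt 0 l) as [|Hl]; auto. exfalso.
  destruct (Hk (-l/2) ltac:(lra)) as [del Hdel].
  set (h := Rmin d del / 2).
  assert (Hmin1 : Rmin d del <= d) by apply Rmin_l.
  assert (Hmin2 : Rmin d del <= del) by apply Rmin_r.
  assert (Hmin0 : 0 < Rmin d del) by (apply Rmin_glb_lt; [lra| apply cond_pos]).
  assert (Hh : h <> 0) by (unfold h; lra).
  assert (Hh2 : Rabs h < del) by (unfold h; rewrite Rabs_right; lra).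
  specialize (Hdel h Hh Hh2).
  assert (Hq : 0 <= (k (z + h) - k z) / h).
  { apply quot_nonneg'; [| unfold h; lra]. assert (k z <= k (z+h)) by (apply Hm; unfold h; lra). lra. }
  apply Rabs_def2 in Hdel. lra.
Qed.

Lemma mono_deriv (F dF : R -> R) a b : a <= b ->
  (forall t, a <= t <= b -> is_derive F t (dF t)) ->
  (forall t, a <= t <= b -> 0 <= dF t) -> F a <= F b.
Proof.
  intros Hab HF Hd.
  destruct (MVT_gen F a b dF) as [c [Hc Heq]].
  - intros x Hx. rewrite Rmin_left in Hx by lra. rewrite Rmax_right in Hx by lra. apply HF; lra.
  - intros x Hx. rewrite Rmin_left in Hx by lra. rewrite Rmax_right in Hx by lra.
    apply continuity_pt_filterlim. apply (ex_derive_continuous F x). eexists; apply HF; lra.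
  - rewrite Rmin_left in Hc by lra. rewrite Rmax_right in Hc by lra.
    assert (0 <= dF c * (b - a)) by (apply Rmult_le_pos; [apply Hd; lra| lra]). lra.
Qed.

Lemma smono_deriv (F dF : R -> R) a b : a < b ->
  (forall t, a <= t <= b -> is_derive F t (dF t)) ->
  (forall t, a <= t <= b -> 0 < dF t) -> F a < F b.
Proof.
  intros Hab HF Hd.
  destruct (MVT_gen F a b dF) as [c [Hc Heq]].
  - intros x Hx. rewrite Rmin_left in Hx by lra. rewrite Rmax_right in Hx by lra. apply HF; lra.
  - intros x Hx. rewrite Rmin_left in Hx by lra. rewrite Rmax_right in Hx by lra.
    apply continuity_pt_filterlim. apply (ex_derive_continuous F x). eexists; apply HF; lra.
  - rewrite Rmin_left in Hc by lra. rewrite Rmax_right in Hc by lra.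
    assert (0 < dF c * (b - a)) by (apply Rmult_lt_0_compat; [apply Hd; lra| lra]). lra.
Qed.

Lemma const_deriv (F dF : R -> R) a b : a <= b ->
  (forall t, a <= t <= b -> is_derive F t (dF t)) ->
  (forall t, a <= t <= b -> dF t = 0) -> F a = F b.
Proof.
  intros Hab HF Hd. apply Rle_antisym.
  - apply (mono_deriv F dF); auto. intros t Ht; rewrite Hd; lra.
  - assert (- F a <= - F b); [|lra].
    apply (mono_deriv (fun t => - F t) (fun t => - dF t)); auto.
    + intros t Ht. apply (is_derive_opp F t (dF t)). auto.
    + intros t Ht; rewrite Hd; lra.
Qed.

Lemma cont_at (F : R -> R) x l : is_derive F x l -> forall eps, 0 < eps ->
  exists d, 0 < d /\ forall u, Rabs (u - x) < d -> Rabs (F u - F x) < eps.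
Proof.
  intros H eps He.
  assert (Hc : continuous F x) by (apply (ex_derive_continuous (K:=R_AbsRing) (V:=R_NormedModule)); exists l; exact H).
  pose proof (proj1 (filterlim_locally F (F x)) Hc (mkposreal eps He)) as H1.
  destruct H1 as [d Hd]. exists d. split; [apply cond_pos|].
  intros u Hu. apply (Hd u). exact Hu.
Qed.

Lemma lim_right0 (F : R -> R) l : filterlim F (at_right 0) (locally l) -> forall eps, 0 < eps ->
  exists d, 0 < d /\ forall t, 0 < t < d -> Rabs (F t - l) < eps.
Proof.
  intros H eps He.
  pose proof (proj1 (filterlim_locally F l) H (mkposreal eps He)) as H1.
  destruct H1 as [d Hd]. exists d. split; [apply cond_pos|].
  intros t Ht. apply (Hd t); [| lra].
  unfold ball; simpl; unfold AbsRing_ball, abs, minus, plus, opp; simpl.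
  rewrite Ropp_0, Rplus_0_r, Rabs_right; lra.
Qed.


Ltac drw H := let T := type of H in match T with is_derive ?F ?t ?l =>
  match goal with |- context [Derive ?F' t] =>
    replace (Derive F' t) with l by (symmetry; apply is_derive_unique; exact H) end end.
Lemma wronsk (G Q W P : R -> R) dG dQ dW dP t :
  is_derive G t dG -> is_derive Q t dQ -> is_derive W t dW -> is_derive P t dP ->
  is_derive (fun u => G u * Q u - W u * P u) t (dG * Q t + G t * dQ - (dW * P t + W t * dP)).
Proof.
  intros H1 H2 H3 H4. auto_derive.
  - repeat split; eexists; eauto.
  - drw H1; drw H2; drw H3; drw H4. ring.
Qed.

Lemma quot_der (G W : R -> R) dG dW t :
  is_derive G t dG -> is_derive W t dW -> W t <> 0 ->
  is_derive (fun u => G u / W u) t ((dG * W t - G t * dW) / (W t) ^ 2).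
Proof.
  intros H1 H2 H3. auto_derive.
  - repeat split; try (eexists; eauto); auto.
  - drw H1; drw H2. field. auto.
Qed.

Lemma gron_der (W W1 : R -> R) dW dW1 K t :
  is_derive W t dW -> is_derive W1 t dW1 ->
  is_derive (fun u => (W u ^ 2 + W1 u ^ 2) * exp (K * u)) t
    ((2 * W t * dW + 2 * W1 t * dW1 + K * (W t ^ 2 + W1 t ^ 2)) * exp (K * t)).
Proof.
  intros H1 H2. auto_derive.
  - repeat split; eexists; eauto.
  - drw H1; drw H2. ring.
Qed.

Lemma rho_pos t : 0 < t -> 0 < rho t.
Proof. intros. unfold rho. apply Rmult_lt_0_compat; [nra| apply exp_pos]. Qed.

Lemma rho_le t : 0 < t -> rho t <= t ^ 2.
Proof. intros. unfold rho.
  assert (exp (- t ^ 2 / 4) <= 1).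
  { rewrite <- exp_0. destruct (Req_dec (- t ^ 2 / 4) 0) as [E|E].
    - rewrite E; lra.
    - apply Rlt_le, exp_increasing. nra. }
  assert (0 < t ^ 2) by nra. nra. Qed.

Lemma rho_der t : is_derive rho t (rho t * (2 / t - t / 2)) \/ t = 0.
Proof.
  destruct (Req_dec t 0) as [E|E]; [right; auto| left].
  unfold rho. auto_derive; auto.
  replace (exp (- (t * (t * 1)) * / 4)) with (exp (- t ^ 2 / 4)) by (f_equal; field).
  field. auto.
Qed.

Lemma W1_der (W1 Q dQ : R -> R) t : 0 < t ->
  (forall u, 0 < u -> Q u = rho u * W1 u) -> is_derive Q t (dQ t) ->
  is_derive W1 t ((dQ t) / rho t - (2 / t - t / 2) * W1 t).
Proof.
  intros Ht HQ HdQ.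
  destruct (rho_der t) as [Hr|]; [|lra].
  assert (Hrt := rho_pos t Ht).
  apply (is_derive_ext_loc (fun u => Q u / rho u)).
  - apply (locally_open (fun u => 0 < u)); [apply open_gt| |exact Ht].
    intros u Hu. simpl. rewrite HQ by auto. field. apply Rgt_not_eq, rho_pos; auto.
  - replace ((dQ t) / rho t - (2 / t - t / 2) * W1 t) with
      ((dQ t * rho t - Q t * (rho t * (2 / t - t / 2))) / (rho t) ^ 2).
    + apply quot_der; auto. lra.
    + rewrite HQ by auto. field. lra.
Qed.

Lemma nonneg_from_mono (F dF : R -> R) b :
  (forall t, 0 < t <= b -> is_derive F t (dF t)) ->
  (forall t, 0 < t <= b -> 0 <= dF t) ->
  (forall eps eta, 0 < eps -> 0 < eta -> exists xi, 0 < xi < eta /\ Rabs (F xi) < eps) ->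
  forall t, 0 < t <= b -> 0 <= F t.
Proof.
  intros HF Hd Hs t Ht.
  destruct (Rle_or_lt 0 (F t)) as [|Hlt]; auto. exfalso.
  destruct (Hs (- F t) t ltac:(lra) ltac:(lra)) as [xi [Hxi Habs]].
  assert (F xi <= F t).
  { apply (mono_deriv F dF); try lra; intros; [apply HF| apply Hd]; lra. }
  apply Rabs_def2 in Habs. lra.
Qed.

Lemma locally_pos y : 0 < y -> locally y (fun t => 0 < t).
Proof. intros Hy. apply (locally_open (fun t => 0 < t)); auto. apply open_gt. Qed.

Lemma diff_ode (f f1 f2 f3 : R -> R) y : 0 < y ->
  (forall t, 0 < t -> is_derive f t (f1 t)) ->
  (forall t, 0 < t -> is_derive f1 t (f2 t)) ->
  (forall t, 0 < t -> is_derive f2 t (f3 t)) ->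
  (forall t, 0 < t -> f2 t + (2 / t - t / 2) * f1 t - sin (2 * f t) / t ^ 2 = 0) ->
  f3 y + (-2 / y ^ 2 - 1/2) * f1 y + (2 / y - y / 2) * f2 y
   - (2 * cos (2 * f y) * f1 y * y ^ 2 - sin (2 * f y) * (2 * y)) / y ^ 4 = 0.
Proof.
  intros Hy H1 H2 H3 Hode.
  assert (HE : is_derive (fun t => f2 t + (2 / t - t / 2) * f1 t - sin (2 * f t) / t ^ 2) y 0).
  { apply (is_derive_ext_loc (fun _ => 0)).
    - generalize (locally_pos y Hy). apply filter_imp. intros t Ht. rewrite Hode; auto.
    - auto_derive; auto. }
  assert (HE2 : is_derive (fun t => f2 t + (2 / t - t / 2) * f1 t - sin (2 * f t) / t ^ 2) y
    (f3 y + (-2 / y ^ 2 - 1/2) * f1 y + (2 / y - y / 2) * f2 y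
   - (2 * cos (2 * f y) * f1 y * y ^ 2 - sin (2 * f y) * (2 * y)) / y ^ 4)).
  { auto_derive.
    - repeat split; try (eexists; eauto); try lra. apply Rgt_not_eq; nra.
    - replace (Derive (fun x => f x) y) with (f1 y) by (symmetry; apply is_derive_unique; apply H1; auto).
      replace (Derive (fun x => f1 x) y) with (f2 y) by (symmetry; apply is_derive_unique; apply H2; auto).
      replace (Derive (fun x => f2 x) y) with (f3 y) by (symmetry; apply is_derive_unique; apply H3; auto).
      field. lra. }
  rewrite <- (is_derive_unique _ _ _ HE2). rewrite (is_derive_unique _ _ _ HE). auto.
Qed.

Lemma lin_id (f f1 f2 f3 : R -> R) (s : R) y : 0 < y ->
  (forall t, 0 < t -> is_derive f t (f1 t)) ->
  (forall t, 0 < t -> is_derive f1 t (f2 t)) ->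
  (forall t, 0 < t -> is_derive f2 t (f3 t)) ->
  (forall t, 0 < t -> f2 t + (2 / t - t / 2) * f1 t - sin (2 * f t) / t ^ 2 = 0) ->
  is_derive (fun t => rho t * (s * (f1 t + t * f2 t))) y
    (rho y * (2 * cos (2 * f y) / y ^ 2 + 1) * (s * y * f1 y)).
Proof.
  intros Hy H1 H2 H3 Hode.
  assert (Hd := diff_ode f f1 f2 f3 y Hy H1 H2 H3 Hode).
  assert (Ho := Hode y Hy).
  assert (Hs : sin (2 * f y) = y ^ 2 * (f2 y + (2 / y - y / 2) * f1 y)).
  { assert (Hq : sin (2 * f y) / y ^ 2 = f2 y + (2 / y - y / 2) * f1 y) by lra. rewrite <- Hq. field. lra. }
  assert (Hf3 : f3 y = - ((-2 / y ^ 2 - 1/2) * f1 y + (2 / y - y / 2) * f2 y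
   - (2 * cos (2 * f y) * f1 y * y ^ 2 - sin (2 * f y) * (2 * y)) / y ^ 4)) by lra.
  unfold rho. auto_derive.
  - repeat split; eexists; eauto.
  - replace (Derive (fun x => f1 x) y) with (f2 y) by (symmetry; apply is_derive_unique; apply H2; auto).
    replace (Derive (fun x => f2 x) y) with (f3 y) by (symmetry; apply is_derive_unique; apply H3; auto).
    rewrite Hf3, Hs. replace (exp (- (y * (y * 1)) * / 4)) with (exp (- y ^ 2 / 4)) by (f_equal; field). field. lra.
Qed.

Lemma small_pos a b c d e : 0 < a -> 0 < b -> 0 < c -> 0 < d -> 0 < e ->
  exists y, 0 < y /\ y < a /\ y < b /\ y < c /\ y < d /\ y < e.
Proof.
  intros. exists (Rmin (Rmin (Rmin a b) (Rmin c d)) e / 2).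
  assert (H4 := Rmin_l (Rmin (Rmin a b) (Rmin c d)) e).
  assert (H5 := Rmin_r (Rmin (Rmin a b) (Rmin c d)) e).
  assert (H6 := Rmin_l (Rmin a b) (Rmin c d)).
  assert (H7 := Rmin_r (Rmin a b) (Rmin c d)).
  assert (H8 := Rmin_l a b). assert (H9 := Rmin_r a b).
  assert (H10 := Rmin_l c d). assert (H11 := Rmin_r c d).
  assert (0 < Rmin (Rmin (Rmin a b) (Rmin c d)) e).
  { repeat apply Rmin_glb_lt; auto. }
  lra.
Qed.

Lemma lin_comb_der (G W : R -> R) dG dW c t :
  is_derive G t dG -> is_derive W t dW ->
  is_derive (fun u => G u - c * W u) t (dG - c * dW).
Proof.
  intros H1 H2. auto_derive.
  - repeat split; eexists; eauto.
  - drw H1; drw H2. ring.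
Qed.

Lemma core (f f1 f2 G dG P W W1 Q dQ : R -> R) (s lam : R) :
 (s = 1 \/ s = -1) ->
 (forall t, 0 < t -> is_derive f t (f1 t)) ->
 (forall t, 0 < t -> G t = s * t * f1 t) ->
 (forall t, 0 < t -> dG t = s * (f1 t + t * f2 t)) ->
 (forall t, 0 < t -> is_derive G t (dG t)) ->
 (forall t, 0 < t -> P t = rho t * dG t) ->
 (forall t, 0 < t -> is_derive P t (rho t * (2 * cos (2 * f t) / t ^ 2 + 1) * G t)) ->
 (forall t, 0 < t -> 0 <= G t) ->
 (forall t, 0 < t -> is_derive W t (W1 t)) ->
 (forall t, 0 < t -> Q t = rho t * W1 t) ->
 (forall t, 0 < t -> is_derive Q t (dQ t)) ->
 (forall t, 0 < t -> dQ t = rho t * (2 * cos (2 * f t) / t ^ 2 - lam) * W t) ->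
 (forall eps, 0 < eps -> exists d, 0 < d /\ forall t, 0 < t < d -> Rabs (f t) < eps) ->
 (exists M d, 0 <= M /\ 0 < d /\ forall t, 0 < t < d -> Rabs (f1 t) <= M /\ Rabs (f2 t) <= M) ->
 (exists d, 0 < d /\ forall t, 0 < t < d -> t / 2 < W t < 3 * t / 2) ->
 lam <= -1 ->
 forall y, 0 < y -> W y <> 0.
Proof.
  intros Hs Hf HGd HdGd HG HPd HP HGpos HW HQd HQ HdQ Hf0 Hbd Hinit Hlam y0 Hy0 HW0.
  destruct Hinit as [dW [HdW HWb]].
  assert (Hy0ge : dW <= y0).
  { destruct (Rle_or_lt dW y0) as [|Hc]; auto. specialize (HWb y0 (conj Hy0 Hc)). lra. }
  set (E := fun t => 0 < t <= y0 /\ forall u, 0 < u <= t -> 0 < W u).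
  assert (HEb : bound E).
  { exists y0. intros t [Ht _]. lra. }
  assert (HEe : exists t, E t).
  { exists (dW / 2). split; [lra|]. intros u Hu. specialize (HWb u ltac:(lra)). lra. }
  destruct (completeness E HEb HEe) as [z [Hub Hlub]].
  assert (Hz1 : dW / 2 <= z).
  { apply Hub. split; [lra|]. intros u Hu. specialize (HWb u ltac:(lra)). lra. }
  assert (Hz2 : z <= y0).
  { apply Hlub. intros t [Ht _]. lra. }
  assert (Hzpos : 0 < z) by lra.
  assert (HWpos : forall u, 0 < u < z -> 0 < W u).
  { intros u Hu. destruct (Rlt_or_le 0 (W u)) as [|Hle]; auto. exfalso.
    assert (z <= u); [|lra]. apply Hlub. intros t [Ht Ht2].
    destruct (Rlt_or_le t u) as [|Htu]; [lra|]. specialize (Ht2 u ltac:(lra)). lra. }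
  assert (HWz : W z = 0).
  { destruct (Rtotal_order (W z) 0) as [Hneg|[Heq|Hposz]]; auto; exfalso.
    - destruct (cont_at W z (W1 z) (HW z Hzpos) (- W z) ltac:(lra)) as [d [Hd Hc]].
      set (u := z - Rmin d z / 2).
      assert (Hm1 := Rmin_l d z). assert (Hm2 := Rmin_r d z).
      assert (Hm0 : 0 < Rmin d z) by (apply Rmin_glb_lt; lra).
      specialize (Hc u). assert (Hu : Rabs (u - z) < d) by (unfold u; rewrite Rabs_left; lra).
      specialize (Hc Hu). apply Rabs_def2 in Hc. specialize (HWpos u ltac:(unfold u; lra)). lra.
    - destruct (Req_dec z y0) as [Hzy|Hzy]; [subst z; lra|].
      destruct (cont_at W z (W1 z) (HW z Hzpos) (W z) ltac:(lra)) as [d [Hd Hc]].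
      assert (Hm1 := Rmin_l (z + d / 2) y0). assert (Hm2 := Rmin_r (z + d / 2) y0).
      set (t' := Rmin (z + d / 2) y0) in *.
      assert (Hm0 : z < t') by (apply Rmin_glb_lt; lra).
      assert (E t').
      { split; [lra|]. intros u Hu. destruct (Rlt_or_le u z) as [Huz|Huz].
        - apply HWpos; lra.
        - assert (Hu2 : Rabs (u - z) < d) by (rewrite Rabs_right; lra).
          specialize (Hc u Hu2). apply Rabs_def2 in Hc. lra. }
      specialize (Hub t' H). lra. }
  assert (HW1z : W1 z <= 0).
  { apply (deriv_left_ge W z (W1 z) z Hzpos (HW z Hzpos)). intros t Ht.
    rewrite HWz. apply Rlt_le, HWpos; lra. }
  set (h := fun u => G u * Q u - W u * P u).
  set (dh := fun t => rho t * G t * W t * (- lam - 1)).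
  assert (Hh : forall t, 0 < t -> is_derive h t (dh t)).
  { intros t Ht. assert (H := wronsk G Q W P (dG t) (dQ t) (W1 t) _ t (HG t Ht) (HQ t Ht) (HW t Ht) (HP t Ht)).
    unfold dh. replace (rho t * G t * W t * (- lam - 1)) with
      (dG t * Q t + G t * dQ t - (W1 t * P t + W t * (rho t * (2 * cos (2 * f t) / t ^ 2 + 1) * G t))).
    - exact H.
    - rewrite HQd, HdQ, HPd by auto. ring. }
  assert (Hnear : forall eps eta, 0 < eps -> 0 < eta ->
     exists xi, 0 < xi < eta /\ Rabs (h xi) < eps /\ Rabs (Q xi) < eps).
  { destruct Hbd as [M [df [HM [Hdf Hb]]]].
    intros eps eta He Heta.
    destruct (small_pos eta df dW 1 (eps / (8 * M + 8)) Heta Hdf HdW ltac:(lra)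
      ltac:(apply Rdiv_lt_0_compat; lra)) as [y [Hy1 [Hy2 [Hy3 [Hy4 [Hy5 Hy6]]]]]].
    assert (Hy7 : y * (8 * M + 8) < eps).
    { replace eps with (eps / (8 * M + 8) * (8 * M + 8)) by (field; lra).
      apply Rmult_lt_compat_r; lra. }
    destruct (MVT_gen W (y / 2) y W1) as [xi [Hxi Heq]].
    - intros x Hx. rewrite Rmin_left in Hx by lra. rewrite Rmax_right in Hx by lra. apply HW; lra.
    - intros x Hx. rewrite Rmin_left in Hx by lra. rewrite Rmax_right in Hx by lra.
      apply continuity_pt_filterlim, (ex_derive_continuous (K:=R_AbsRing) (V:=R_NormedModule)).
      exists (W1 x); apply HW; lra.
    - rewrite Rmin_left in Hxi by lra. rewrite Rmax_right in Hxi by lra.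
      assert (HWy := HWb y ltac:(lra)). assert (HWy2 := HWb (y / 2) ltac:(lra)).
      assert (HW1b : Rabs (W1 xi) <= 3).
      { apply Rabs_le; split; nra. }
      exists xi. split; [lra|].
      assert (Hxi0 : 0 < xi) by lra.
      assert (Hr := rho_le xi Hxi0). assert (Hr0 := rho_pos xi Hxi0).
      assert (Hx2 : xi ^ 2 <= xi) by nra.
      assert (Hx3 : xi ^ 2 * xi <= xi) by nra.
      destruct (Hb xi ltac:(lra)) as [Hb1 Hb2].
      assert (HW1p := Rabs_pos (W1 xi)).
      assert (HQb : Rabs (Q xi) <= 3 * xi ^ 2).
      { rewrite HQd by lra. rewrite Rabs_mult, (Rabs_right (rho xi)) by lra. nra. }
      assert (Hsabs : forall u, Rabs (s * u) = Rabs u).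
      { intros u. rewrite Rabs_mult. destruct Hs as [-> | ->];
          [rewrite Rabs_R1 | rewrite (Rabs_left (-1)) by lra]; ring. }
      assert (HGb : Rabs (G xi) <= xi * M).
      { rewrite HGd by lra. replace (s * xi * f1 xi) with (xi * (s * f1 xi)) by ring.
        rewrite Rabs_mult, Hsabs, (Rabs_right xi) by lra. nra. }
      assert (HdGb : Rabs (dG xi) <= 2 * M).
      { rewrite HdGd by lra. rewrite Hsabs.
        apply Rle_trans with (Rabs (f1 xi) + Rabs (xi * f2 xi)); [apply Rabs_triang|].
        rewrite Rabs_mult, (Rabs_right xi) by lra. nra. }
      assert (HdGp := Rabs_pos (dG xi)).
      assert (HPb : Rabs (P xi) <= xi ^ 2 * (2 * M)).
      { rewrite HPd by lra. rewrite Rabs_mult, (Rabs_right (rho xi)) by lra. nra. }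
      assert (HWb' : Rabs (W xi) <= 2 * xi).
      { assert (HWx := HWb xi ltac:(lra)). rewrite Rabs_right; lra. }
      assert (HGp := Rabs_pos (G xi)). assert (HQp := Rabs_pos (Q xi)).
      assert (HWp := Rabs_pos (W xi)). assert (HPp := Rabs_pos (P xi)).
      split.
      + unfold h.
        apply Rle_lt_trans with (Rabs (G xi) * Rabs (Q xi) + Rabs (W xi) * Rabs (P xi)).
        { unfold Rminus. apply Rle_trans with (Rabs (G xi * Q xi) + Rabs (- (W xi * P xi)));
          [apply Rabs_triang| rewrite Rabs_Ropp, !Rabs_mult; lra]. }
        assert (Rabs (G xi) * Rabs (Q xi) <= (xi * M) * (3 * xi ^ 2)).
        { apply Rmult_le_compat; auto. }
        assert (Rabs (W xi) * Rabs (P xi) <= (2 * xi) * (xi ^ 2 * (2 * M))).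
        { apply Rmult_le_compat; auto. }
        assert (xi * M * (3 * xi ^ 2) + 2 * xi * (xi ^ 2 * (2 * M)) <= 7 * M * y).
        { replace (xi * M * (3 * xi ^ 2) + 2 * xi * (xi ^ 2 * (2 * M))) with (7 * M * (xi ^ 2 * xi)) by ring.
          apply Rmult_le_compat_l; lra. }
        nra.
      + nra. }
  assert (Hh_nn : forall t, 0 < t <= z -> 0 <= h t).
  { apply (nonneg_from_mono h dh z).
    - intros t Ht. apply Hh; lra.
    - intros t Ht. unfold dh.
      assert (0 <= W t).
      { destruct (Req_dec t z) as [->|]; [lra|]. apply Rlt_le, HWpos; lra. }
      assert (0 < rho t) by (apply rho_pos; lra).
      assert (0 <= G t) by (apply HGpos; lra).
      apply Rmult_le_pos; [|lra]. apply Rmult_le_pos; [|auto]. apply Rmult_le_pos; lra.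
    - intros eps eta He Heta. destruct (Hnear eps eta He Heta) as [xi [H1 [H2 H3]]].
      exists xi; auto. }
  assert (Hhz : h z <= 0).
  { unfold h. rewrite HWz, HQd by auto.
    assert (0 < rho z) by (apply rho_pos; lra). assert (0 <= G z) by (apply HGpos; lra).
    assert (0 <= G z * rho z) by (apply Rmult_le_pos; lra).
    assert (G z * rho z * W1 z <= 0) by nra. nra. }
  assert (Hh0 : forall t, 0 < t <= z -> h t = 0).
  { intros t Ht. assert (h t <= h z).
    { apply (mono_deriv h dh); try lra.
      - intros u Hu; apply Hh; lra.
      - intros u Hu. unfold dh.
        assert (0 <= W u).
        { destruct (Req_dec u z) as [->|]; [lra|]. apply Rlt_le, HWpos; lra. }
        assert (0 < rho u) by (apply rho_pos; lra).
        assert (0 <= G u) by (apply HGpos; lra).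
        apply Rmult_le_pos; [|lra]. apply Rmult_le_pos; [|auto]. apply Rmult_le_pos; lra. }
    specialize (Hh_nn t Ht). lra. }
  set (c := G (z / 2) / W (z / 2)).
  assert (Hratio : forall t1 t2, 0 < t1 < z -> 0 < t2 < z -> t1 <= t2 -> G t1 / W t1 = G t2 / W t2).
  { intros t1 t2 Ht1 Ht2 Hle.
    apply (const_deriv (fun u => G u / W u) (fun u => (dG u * W u - G u * W1 u) / (W u) ^ 2)); auto.
    - intros u Hu. apply quot_der; [apply HG; lra| apply HW; lra|].
      apply Rgt_not_eq, HWpos; lra.
    - intros u Hu. assert (Hu0 := Hh0 u ltac:(lra)). unfold h in Hu0.
      rewrite HQd, HPd in Hu0 by lra.
      assert (0 < rho u) by (apply rho_pos; lra).
      assert (dG u * W u - G u * W1 u = 0).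
      { apply (Rmult_eq_reg_l (rho u)); [|lra]. lra. }
      rewrite H0. unfold Rdiv. ring. }
  assert (HGc : forall t, 0 < t < z -> G t = c * W t).
  { intros t Ht. assert (0 < W t) by (apply HWpos; auto).
    assert (G t / W t = c).
    { unfold c. destruct (Rle_or_lt t (z / 2)).
      - apply Hratio; lra.
      - symmetry. apply Hratio; lra. }
    rewrite <- H0. field. lra. }
  destruct (Req_dec (W1 z) 0) as [HA|HB].
  - (* Gronwall *)
    set (a := z / 2).
    assert (Ha : 0 < a < z) by (unfold a; lra).
    set (K1 := 1 + 2 / a ^ 2 + Rabs lam). set (K2 := 2 / a + z). set (K := K1 + 2 * K2).
    set (dW1 := fun t => dQ t / rho t - (2 / t - t / 2) * W1 t).
    set (F := fun u => (W u ^ 2 + W1 u ^ 2) * exp (K * u)).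
    assert (HF : F a <= F z).
    { apply (mono_deriv F (fun t => (2 * W t * W1 t + 2 * W1 t * dW1 t + K * (W t ^ 2 + W1 t ^ 2)) * exp (K * t))); try lra.
      - intros t Ht. apply gron_der; [apply HW; lra| apply (W1_der W1 Q dQ t); [lra| exact HQd| apply HQ; lra]].
      - intros t Ht. apply Rmult_le_pos; [| apply Rlt_le, exp_pos].
        assert (Ht0 : 0 < t) by lra.
        assert (Hrt : 0 < rho t) by (apply rho_pos; lra).
        assert (Hd : dW1 t = (2 * cos (2 * f t) / t ^ 2 - lam) * W t - (2 / t - t / 2) * W1 t).
        { unfold dW1. rewrite HdQ by lra. field. split; lra. }
        rewrite Hd.
        assert (Hta : a ^ 2 <= t ^ 2) by nra. assert (Ha2 : 0 < a ^ 2) by nra.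
        assert (H2t : 2 / t ^ 2 <= 2 / a ^ 2).
        { unfold Rdiv. apply Rmult_le_compat_l; [lra| apply Rinv_le_contravar; lra]. }
        assert (H2t0 : 0 < 2 / t ^ 2) by (apply Rdiv_lt_0_compat; nra).
        assert (Hcos := COS_bound (2 * f t)).
        assert (HcB : - (2 / t ^ 2) <= 2 * cos (2 * f t) / t ^ 2 <= 2 / t ^ 2).
        { replace (2 * cos (2 * f t) / t ^ 2) with (cos (2 * f t) * (2 / t ^ 2)) by (field; lra).
          split; nra. }
        assert (Hlam2 : - Rabs lam <= lam <= Rabs lam) by (unfold Rabs; destruct (Rcase_abs lam); lra).
        assert (H2a : 2 / t <= 2 / a).
        { unfold Rdiv. apply Rmult_le_compat_l; [lra| apply Rinv_le_contravar; lra]. }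
        assert (H2t1 : 0 < 2 / t) by (apply Rdiv_lt_0_compat; lra).
        assert (H2a1 : 0 < 2 / a) by (apply Rdiv_lt_0_compat; lra).
        assert (HB1 : - K1 <= 1 + (2 * cos (2 * f t) / t ^ 2 - lam) <= K1) by (unfold K1; lra).
        assert (Hbb : - K2 <= 2 / t - t / 2 <= K2) by (unfold K2; lra).
        set (B := 1 + (2 * cos (2 * f t) / t ^ 2 - lam)) in *.
        set (bb := 2 / t - t / 2) in *.
        assert (E1 : 0 <= (K1 + B) * (W t + W1 t) ^ 2) by (apply Rmult_le_pos; [lra| apply pow2_ge_0]).
        assert (E2 : 0 <= (K1 - B) * (W t - W1 t) ^ 2) by (apply Rmult_le_pos; [lra| apply pow2_ge_0]).
        assert (E3 : 0 <= (K2 - bb) * W1 t ^ 2) by (apply Rmult_le_pos; [lra| apply pow2_ge_0]).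
        assert (E4 : 0 <= K2 * W t ^ 2) by (apply Rmult_le_pos; [lra| apply pow2_ge_0]).
        replace (2 * W t * W1 t + 2 * W1 t * ((2 * cos (2 * f t) / t ^ 2 - lam) * W t - bb * W1 t) +
          K * (W t ^ 2 + W1 t ^ 2)) with
          (((K1 + B) * (W t + W1 t) ^ 2 + (K1 - B) * (W t - W1 t) ^ 2) / 2 + 2 * ((K2 - bb) * W1 t ^ 2) + 2 * (K2 * W t ^ 2)).
        + lra.
        + unfold B, K. field. lra. }
    unfold F in HF. rewrite HWz, HA in HF.
    assert (0 < W a) by (apply HWpos; lra). assert (0 < exp (K * a)) by apply exp_pos.
    assert (0 < (W a ^ 2 + W1 a ^ 2) * exp (K * a)) by (apply Rmult_lt_0_compat; nra). replace ((0 ^ 2 + 0 ^ 2) * exp (K * z)) with 0 in HF by ring. lra.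
  - assert (HW1n : W1 z < 0) by lra.
    assert (Hrz : 0 < rho z) by (apply rho_pos; lra).
    assert (HGz : G z = 0).
    { assert (Hz0 := Hh0 z ltac:(lra)). unfold h in Hz0. rewrite HWz, HQd in Hz0 by lra.
      assert (G z * (rho z * W1 z) = 0) by lra.
      apply Rmult_integral in H. destruct H as [|H]; auto.
      apply Rmult_integral in H. lra. }
    assert (HdGz : dG z = 0).
    { apply Rle_antisym.
      - apply (deriv_left_ge G z (dG z) z Hzpos (HG z Hzpos)). intros t Ht.
        rewrite HGz. apply HGpos; lra.
      - apply (deriv_right_ge G z (dG z) 1 ltac:(lra) (HG z Hzpos)). intros t Ht.
        rewrite HGz. apply HGpos; lra. }
    assert (Hk := lin_comb_der G W (dG z) (W1 z) c z (HG z Hzpos) (HW z Hzpos)).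
    assert (Hkl : forall t, z - z < t < z -> (fun u => G u - c * W u) t = (fun u => G u - c * W u) z).
    { intros t Ht. simpl. rewrite HGc by lra. rewrite HGz, HWz. ring. }
    assert (Hk1 : 0 <= dG z - c * W1 z).
    { apply (deriv_left_le _ z _ z Hzpos Hk). intros t Ht. rewrite (Hkl t); [lra|lra]. }
    assert (Hk2 : dG z - c * W1 z <= 0).
    { apply (deriv_left_ge _ z _ z Hzpos Hk). intros t Ht. rewrite (Hkl t); [lra|lra]. }
    assert (Hc0 : c = 0).
    { assert (c * W1 z = 0) by lra. apply Rmult_integral in H. destruct H; auto; lra. }
    assert (Hf1z : forall t, 0 < t < z -> f1 t = 0).
    { intros t Ht. assert (H := HGc t Ht). rewrite Hc0, HGd in H by lra.
      assert (s * t * f1 t = 0) by lra. apply Rmult_integral in H0. destruct H0 as [H0|]; auto.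
      apply Rmult_integral in H0. destruct H0; lra. }
    assert (Hfc : forall t, 0 < t < z -> f t = f (z / 2)).
    { intros t Ht. destruct (Rle_or_lt t (z / 2)).
      - apply (const_deriv f f1); try lra.
        + intros u Hu; apply Hf; lra.
        + intros u Hu; apply Hf1z; lra.
      - symmetry. apply (const_deriv f f1); try lra.
        + intros u Hu; apply Hf; lra.
        + intros u Hu; apply Hf1z; lra. }
    assert (Hfz2 : f (z / 2) = 0).
    { destruct (Req_dec (f (z / 2)) 0) as [|Hne]; auto. exfalso.
      destruct (Hf0 (Rabs (f (z / 2))) ltac:(apply Rabs_pos_lt; auto)) as [d [Hd Hd2]].
      assert (Hm1 := Rmin_l d z). assert (Hm2 := Rmin_r d z).
      assert (Hm0 : 0 < Rmin d z) by (apply Rmin_glb_lt; lra).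
      specialize (Hd2 (Rmin d z / 2) ltac:(lra)). rewrite Hfc in Hd2 by lra. lra. }
    assert (HdQp : forall t, 0 < t < z -> 0 < dQ t).
    { intros t Ht. rewrite HdQ by lra. rewrite Hfc, Hfz2 by lra.
      rewrite Rmult_0_r, cos_0.
      assert (0 < rho t) by (apply rho_pos; lra). assert (0 < W t) by (apply HWpos; lra).
      assert (0 < 2 * 1 / t ^ 2) by (apply Rdiv_lt_0_compat; nra).
      apply Rmult_lt_0_compat; auto. apply Rmult_lt_0_compat; lra. }
    assert (HdQn : forall t, 0 < t <= z -> 0 <= dQ t).
    { intros t Ht. destruct (Req_dec t z) as [->|]; [|apply Rlt_le, HdQp; lra].
      rewrite HdQ, HWz by lra. lra. }
    assert (HQ1 : 0 <= Q (z / 2)).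
    { apply (nonneg_from_mono Q dQ (z / 2)); try lra.
      - intros t Ht; apply HQ; lra.
      - intros t Ht; apply HdQn; lra.
      - intros eps eta He Heta. destruct (Hnear eps eta He Heta) as [xi [H1 [H2 H3]]].
        exists xi; auto. }
    assert (HQ2 : Q (z / 2) < Q (3 * z / 4)).
    { apply (smono_deriv Q dQ); try lra.
      - intros t Ht; apply HQ; lra.
      - intros t Ht; apply HdQp; lra. }
    assert (HQ3 : Q (3 * z / 4) <= Q z).
    { apply (mono_deriv Q dQ); try lra.
      - intros t Ht; apply HQ; lra.
      - intros t Ht; apply HdQn; lra. }
    rewrite (HQd z) in HQ3 by lra. assert (rho z * W1 z < 0) by nra. lra.
Qed.

Lemma G_der (f1 f2 : R -> R) s t : is_derive f1 t (f2 t) ->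
  is_derive (fun u => s * u * f1 u) t (s * (f1 t + t * f2 t)).
Proof. intros H. auto_derive. - eexists; eauto. - drw H. ring. Qed.

Theorem lemma4 (f0 : R -> R) (lam : R) (W : R -> R) :
  smooth_closed_halfline f0 ->
  monotone_halfline f0 ->
  profile_solution f0 ->
  norm_diff_le f0 f0_tilde (5 / 10000) ->
  eigen_ode f0 lam W ->
  init_cond W ->
  lam <= -1 ->
  forall y, 0 < y -> W y <> 0.
Proof.
  intros [Hsm [Hlim Hc0]] Hmon [Hode [Hf00 _]] _ Heig Hinit Hlam.
  set (f1 := Derive f0). set (f2 := Derive f1). set (f3 := Derive f2).
  assert (Hd1 : forall t, 0 < t -> is_derive f0 t (f1 t)).
  { intros t Ht. apply Derive_correct. exact (Hsm 1%nat t Ht). }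
  assert (Hd2 : forall t, 0 < t -> is_derive f1 t (f2 t)).
  { intros t Ht. apply Derive_correct. exact (Hsm 2%nat t Ht). }
  assert (Hd3 : forall t, 0 < t -> is_derive f2 t (f3 t)).
  { intros t Ht. apply Derive_correct. exact (Hsm 3%nat t Ht). }
  assert (Hode' : forall t, 0 < t -> f2 t + (2 / t - t / 2) * f1 t - sin (2 * f0 t) / t ^ 2 = 0).
  { intros t Ht. exact (Hode t Ht). }
  assert (Hs : exists s, (s = 1 \/ s = -1) /\ forall t, 0 < t -> 0 <= s * f1 t).
  { destruct Hmon as [Hm|Hm].
    - exists 1. split; [left; auto|]. intros t Ht.
      apply (deriv_right_ge (fun u => 1 * f0 u) t (1 * f1 t) 1); [lra| |].
      + apply (is_derive_scal f0 t 1 (f1 t)). auto.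
      + intros u Hu. simpl. apply Rmult_le_compat_l; [lra|]. apply Hm; lra.
    - exists (-1). split; [right; auto|]. intros t Ht.
      apply (deriv_right_ge (fun u => -1 * f0 u) t (-1 * f1 t) 1); [lra| |].
      + apply (is_derive_scal f0 t (-1) (f1 t)). auto.
      + intros u Hu. simpl. assert (f0 u <= f0 t) by (apply Hm; lra). lra. }
  destruct Hs as [s [Hs Hsf]].
  assert (HW : forall t, 0 < t -> is_derive W t (Derive W t)).
  { intros t Ht. apply Derive_correct. apply (Heig t Ht). }
  assert (HQ : forall t, 0 < t -> is_derive (fun u => rho u * Derive W u) t
      (Derive (fun u => rho u * Derive W u) t)).
  { intros t Ht. apply Derive_correct. apply (Heig t Ht). }
  apply (core f0 f1 f2 (fun t => s * t * f1 t) (fun t => s * (f1 t + t * f2 t))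
    (fun t => rho t * (s * (f1 t + t * f2 t))) W (Derive W) (fun u => rho u * Derive W u)
    (Derive (fun u => rho u * Derive W u)) s lam); auto.
  - intros t Ht. apply G_der. auto.
  - intros t Ht. apply (lin_id f0 f1 f2 f3 s t); auto.
  - intros t Ht. specialize (Hsf t Ht). replace (s * t * f1 t) with (t * (s * f1 t)) by ring.
    apply Rmult_le_pos; lra.
  - intros t Ht. destruct (Heig t Ht) as [_ [_ Heq]].
    assert (Hr := rho_pos t Ht).
    set (D := Derive (fun u => rho u * Derive W u) t) in *.
    assert (Hq : 1 / rho t * D = 2 * cos (2 * f0 t) / t ^ 2 * W t - lam * W t) by lra.
    replace D with (rho t * (1 / rho t * D)) by (field; lra). rewrite Hq. ring.
  - intros eps He. destruct (lim_right0 f0 (f0 0) Hc0 eps He) as [d [Hd HdB]].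
    exists d. split; auto. intros t Ht. specialize (HdB t Ht). rewrite Hf00, Rminus_0_r in HdB. auto.
  - destruct (Hlim 1%nat) as [l1 Hl1]. destruct (Hlim 2%nat) as [l2 Hl2].
    destruct (lim_right0 _ _ Hl1 1 ltac:(lra)) as [d1 [Hd1' H1]].
    destruct (lim_right0 _ _ Hl2 1 ltac:(lra)) as [d2 [Hd2' H2]].
    exists (Rabs l1 + Rabs l2 + 1), (Rmin d1 d2).
    assert (Hm1 := Rmin_l d1 d2). assert (Hm2 := Rmin_r d1 d2).
    split; [assert (H0 := Rabs_pos l1); assert (H3 := Rabs_pos l2); lra|].
    split; [apply Rmin_glb_lt; lra|].
    intros t Ht. specialize (H1 t ltac:(lra)). specialize (H2 t ltac:(lra)).
    change (Derive_n f0 1 t) with (f1 t) in H1. change (Derive_n f0 2 t) with (f2 t) in H2.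
    assert (H0 := Rabs_pos l1). assert (H3 := Rabs_pos l2).
    assert (Rabs (f1 t) <= Rabs (f1 t - l1) + Rabs l1).
    { replace (f1 t) with ((f1 t - l1) + l1) at 1 by ring. apply Rabs_triang. }
    assert (Rabs (f2 t) <= Rabs (f2 t - l2) + Rabs l2).
    { replace (f2 t) with ((f2 t - l2) + l2) at 1 by ring. apply Rabs_triang. }
    split; lra.
  - destruct (lim_right0 _ _ Hinit (1 / 2) ltac:(lra)) as [d [Hd HdB]].
    exists d. split; auto. intros t Ht. specialize (HdB t Ht). apply Rabs_def2 in HdB.
    assert (HWt : W t = (W t / t) * t) by (field; lra).
    set (q := W t / t) in *. rewrite HWt. split; nra.
Qed.
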